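(* Let $X$ be a scalable monoid over $R$. If $\mathsf{C}$ is a non-trivial orbitoid of $X$ (i.e. $\mathsf{C}\neq\{0_{\mathsf{C}}\}$) that contains a unit element, then $R$ is a non-trivial commutative ring, and $\mathsf{C}$, equipped with the addition $x+y=(\rho+\sigma)\cdot u$ (for $x=\rho\cdot u$, $y=\sigma\cdot u$, $u$ a unit element for $\mathsf{C}$) and with the scalar multiplication $(\lambda,x)\mapsto\lambda\cdot x$ inherited from $X$, is a free module of rank 1 over $R$.
   Context: $R$ is a unital associative (not necessarily commutative) ring. A scalable monoid over $R$ is a monoid $X$ (identity $1_X$) with a map $R\times X\to X$, $(\alpha,x)\mapsto\alpha\cdot x$, such that $1\cdot x=x$, $\alpha\cdot(\beta\cdot x)=\alpha\beta\cdot x$ and $\alpha\cdot xy=(\alpha\cdot x)y=x(\alpha\cdot y)$ for all $\alpha,\beta\in R$, $x,y\in X$. Two elements $x,y\in X$ are commensurable, $x\sim y$, if $\alpha\cdot x=\beta\cdot y$ for some $\alpha,\beta\in R$; this is an equivalence relation, and its equivalence classes are called orbitoids (commensurability classes). Every orbitoid $\mathsf{C}$ has a unique zero element $0_{\mathsf{C}}$ with $0_{\mathsf{C}}=0\cdot x$ for all $x\in\mathsf{C}$; $\mathsf{C}$ is trivial if $\mathsf{C}=\{0_{\mathsf{C}}\}$. A unit element for an orbitoid $\mathsf{C}$ is some $u\in\mathsf{C}$ such that every $x\in\mathsf{C}$ equals $\lambda\cdot u$ for some $\lambda\in R$, and such that $\lambda\cdot u=\lambda'\cdot u$ implies $\lambda=\lambda'$.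 For $x=\rho\cdot u$ and $y=\sigma\cdot u$ in $\mathsf{C}$ ($u$ a unit element for $\mathsf{C}$), the sum is defined as $x+y=(\rho+\sigma)\cdot u$; this does not depend on the choice of unit element $u$. *)

(* Defs.v *)
From HB Require Import structures.
From mathcomp Require Import all_boot all_algebra.
Set Implicit Arguments. Unset Strict Implicit. Unset Printing Implicit Defensive.
Import GRing.Theory.
Local Open Scope ring_scope.

(* A unital associative (possibly non-commutative, possibly trivial) ring is a
   mathcomp [pzRingType]. *)
Definition is_scalable_monoid (R : pzRingType) (X : Type)
    (mul : X -> X -> X) (one : X) (sc : R -> X -> X) : Prop :=
  (forall x y z, mul x (mul y z) = mul (mul x y) z) /\
  (forall x, mul one x = x) /\
  (forall x, mul x one = x) /\
  (forall x, sc 1 x = x) /\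
  (forall a b x, sc a (sc b x) = sc (a * b) x) /\
  (forall a x y, sc a (mul x y) = mul (sc a x) y /\
                     sc a (mul x y) = mul x (sc a y)).

Definition commensurable (R : pzRingType) (X : Type) (sc : R -> X -> X)
    (x y : X) : Prop :=
  exists a b : R, sc a x = sc b y.

Definition is_orbitoid (R : pzRingType) (X : Type) (sc : R -> X -> X)
    (C : X -> Prop) : Prop :=
  exists c : X, forall x, C x <-> commensurable sc x c.

(* the orbitoid C is non-trivial: C <> {0_C}, where 0_C = 0 . x for x in C *)
Definition nontrivial_orbitoid (R : pzRingType) (X : Type) (sc : R -> X -> X)
    (C : X -> Prop) : Prop :=
  exists x, C x /\ x <> sc 0 x.

Definition unit_element (R : pzRingType) (X : Type) (sc : R -> X -> X)
    (C : X -> Prop) (u : X) : Prop :=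
  [/\ C u,
      (forall x, C x -> exists l : R, x = sc l u)
    & (forall l l' : R, sc l u = sc l' u -> l = l')].

Definition is_module_on (R : pzRingType) (X : Type) (C : X -> Prop)
    (add : X -> X -> X) (sc : R -> X -> X) (z : X) : Prop :=
  (forall x y, C x -> C y -> C (add x y)) /\
  (forall a x, C x -> C (sc a x)) /\
  C z /\
  (forall x y w, C x -> C y -> C w -> add x (add y w) = add (add x y) w) /\
  (forall x y, C x -> C y -> add x y = add y x) /\
  (forall x, C x -> add z x = x) /\
  (forall x, C x -> exists y, C y /\ add x y = z) /\
  (forall a x y, C x -> C y -> sc a (add x y) = add (sc a x) (sc a y)) /\
  (forall a b x, C x -> sc (a + b) x = add (sc a x) (sc b x)) /\
  (forall a b x, C x -> sc (a * b) x = sc a (sc b x)) /\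
  (forall x, C x -> sc 1 x = x).

Definition free_rank1_module_on (R : pzRingType) (X : Type) (C : X -> Prop)
    (add : X -> X -> X) (sc : R -> X -> X) : Prop :=
  exists z : X, is_module_on C add sc z /\
    exists b : X, [/\ C b,
                      (forall x, C x -> exists a : R, x = sc a b)
                    & (forall a : R, sc a b = z -> a = 0)].

(* Main.v *)
Require Import Defs.
From mathcomp Require Import all_boot all_algebra.
From Stdlib Require Import ClassicalEpsilon.
Local Open Scope ring_scope.
Import GRing.Theory.

Theorem proposition2p36 (R : pzRingType) (X : Type)
    (mul : X -> X -> X) (one : X) (sc : R -> X -> X)
    (HX : is_scalable_monoid mul one sc)
    (C : X -> Prop) (HC : is_orbitoid sc C)
    (Hnt : nontrivial_orbitoid sc C)
    (Hu : exists u, unit_element sc C u) :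
  [/\ (1 : R) <> 0,
      (forall a b : R, a * b = b * a)
    & exists add : X -> X -> X,
        (forall u, unit_element sc C u ->
           forall rho sigma : R, add (sc rho u) (sc sigma u) = sc (rho + sigma) u)
        /\ free_rank1_module_on C add sc].
Proof.
case: HX => [Hass [Hl1 [Hr1 [Hsc1 [HscM HscA]]]]].
case: Hu => u0 [Cu0 Hsp Hinj].
have H10 : (1 : R) <> 0.
  case: Hnt => x [_ Hx] H; apply: Hx.
  by rewrite -H Hsc1.
have Hcomm : forall a b : R, a * b = b * a.
  move=> a b; apply: Hinj.
  have E1 : mul (sc a one) (sc b u0) = sc (a * b) u0.
    by rewrite -(HscA a one _).1 Hl1 HscM.
  have E2 : mul (sc a one) (sc b u0) = sc (b * a) u0.
    by rewrite -(HscA b _ u0).2 -(HscA a one u0).1 Hl1 HscM.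
  by rewrite -E1 -E2.
have CS : forall l x, C x -> C (sc l x).
  case: HC => c Hc l x /Hc [a [b Hab]]; apply/Hc.
  exists a, (l * b).
  by rewrite HscM Hcomm -HscM Hab HscM.
pose coord (x : X) : R := epsilon (inhabits 0) (fun l => x = sc l u0).
have coordK : forall l, coord (sc l u0) = l.
  move=> l; apply: Hinj; symmetry.
  exact: (epsilon_spec (inhabits 0) (fun k => sc l u0 = sc k u0) (ex_intro _ l erefl)).
have coordE : forall x, C x -> x = sc (coord x) u0.
  move=> x /Hsp Hx.
  exact: (epsilon_spec (inhabits 0) (fun k => x = sc k u0) Hx).
pose add (x y : X) := sc (coord x + coord y) u0.
split => //.
exists add; split.
  move=> u [Cu Hspu _] rho sigma.
  case: (Hsp u Cu) => k ->.
  by rewrite /add !HscM !coordK -mulrDl.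
exists (sc 0 u0); split; last first.
  exists u0; split => //.
  by move=> a /Hinj.
have cz : coord (sc 0 u0) = 0 by rewrite coordK.
split; first by move=> x y _ _; exact: CS.
split; first by move=> a x Cx; exact: CS.
split; first exact: CS.
split; first by move=> x y w _ _ _; rewrite /add !coordK addrA.
split; first by move=> x y _ _; rewrite /add addrC.
split; first by move=> x Cx; rewrite /add cz add0r -coordE.
split.
  move=> x Cx; exists (sc (- coord x) u0); split; first exact: CS.
  by rewrite /add coordK subrr.
split.
  move=> a x y Cx Cy.
  by rewrite /add HscM {2}(coordE x Cx) {2}(coordE y Cy) !HscM !coordK mulrDr.
split.
  move=> a b x Cx.
  by rewrite /add {1 2 3}(coordE x Cx) !HscM !coordK mulrDl.
split; first by move=> a b x _; rewrite HscM.
by move=> x _; rewrite Hsc1.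
Qed.
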